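(* Let $q$ be a power of an odd prime $p$, let $b\in\mathbb{F}_q$ with $b\ne0$, and let $n\ge2$ be an integer. Let $r\ge0$ be such that $p^r$ divides $n+1$ but $p^{r+1}$ does not, and let $m\ge0$ be defined by $n+1=p^r(m+1)$. Assume $r\ge1$. If $q>2m+4$, then there exists $a\in\mathbb{F}_q$ such that $\hat C_n(a,b)$ is LCD.
   Context: For $a,b\in\mathbb{F}_q$ and $n\ge 2$, $\hat T_n(a,b)$ denotes the $n\times n$ symmetric tridiagonal Toeplitz matrix over $\mathbb{F}_q$ with all diagonal entries equal to $a$, all entries on the first super- and sub-diagonals equal to $b$, and all other entries $0$. $\hat C_n(a,b)$ is the $[2n,n]$ linear code over $\mathbb{F}_q$ with generator matrix $[I_n\mid \hat T_n(a,b)]$. A linear code $C$ is LCD if $C\cap C^\perp=\{0\}$ (Euclidean dual). (The paper's statement writes $2^r$ here; it is interpreted via the characteristic $p$ as in Theorem 2.10, which the proof invokes.) *)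

(* Defs.v *)
From HB Require Import structures.
From mathcomp Require Import all_boot all_order all_algebra all_field.
Set Implicit Arguments. Unset Strict Implicit. Unset Printing Implicit Defensive.
Import GRing.Theory.
Local Open Scope ring_scope.

Definition tridiagT (F : fieldType) (n : nat) (a b : F) : 'M[F]_n :=
  \matrix_(i < n, j < n)
    if i == j then a
    else if ((i.+1 == j :> nat) || (j.+1 == i :> nat)) then b else 0.

(* generator matrix [I_n | \hat T_n(a,b)] of \hat C_n(a,b) *)
Definition genC (F : fieldType) (n : nat) (a b : F) : 'M[F]_(n, n + n) :=
  row_mx 1%:M (tridiagT n a b).

Definition in_code (F : fieldType) (k N : nat) (G : 'M[F]_(k, N)) (c : 'rV[F]_N) : Prop :=
  exists u : 'rV[F]_k, c = u *m G.

Definition in_dual (F : fieldType) (k N : nat) (G : 'M[F]_(k, N)) (c : 'rV[F]_N) : Prop :=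
  forall x : 'rV[F]_N, in_code G x -> x *m c^T = 0.

Definition LCD (F : fieldType) (k N : nat) (G : 'M[F]_(k, N)) : Prop :=
  forall c : 'rV[F]_N, in_code G c -> in_dual G c -> c = 0.

(* Main.v *)
Require Import Defs.
From HB Require Import structures.
From mathcomp Require Import all_boot all_order all_algebra all_field.
From mathcomp Require Import ring zify.
Set Implicit Arguments. Unset Strict Implicit. Unset Printing Implicit Defensive.
Import GRing.Theory.
Local Open Scope ring_scope.
Fixpoint Upair (R : comNzRingType) (k : nat) : {poly R} * {poly R} :=
  match k with 0 => (0, 1) | k'.+1 => let pr := Upair R k' in (pr.2, 'X * pr.2 - pr.1) end.
Definition Up (R : comNzRingType) k := (Upair R k).1.

Lemma Up0 (R : comNzRingType) : Up R 0 = 0. Proof. by []. Qed.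
Lemma Up1 (R : comNzRingType) : Up R 1 = 1. Proof. by []. Qed.
Lemma UpSS (R : comNzRingType) k : Up R k.+2 = 'X * Up R k.+1 - Up R k.
Proof. by []. Qed.

Lemma Up_monic (R : comNzRingType) k :
  (Up R k.+1 \is monic) && (size (Up R k.+1) == k.+1)%N.
Proof.
suff: ((Up R k.+1 \is monic) && (size (Up R k.+1) == k.+1)%N) /\
      ((Up R k.+2 \is monic) && (size (Up R k.+2) == k.+2)%N) by case.
elim: k => [|k [/andP[m1 /eqP s1] /andP[m2 /eqP s2]]].
  split; first by rewrite Up1 monic1 size_poly1.
  by rewrite UpSS Up1 Up0 subr0 mulr1 monicX size_polyX.
split; first by apply/andP; split => //; rewrite s2.
have sX : size ('X * Up R k.+2) = k.+3.
  by rewrite mulrC size_mulX ?monic_neq0 // s2.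
have hlt : (size (- Up R k.+1)%R < size ('X * Up R k.+2)%R)%N.
  rewrite size_polyN sX s1. by [].
rewrite UpSS; apply/andP; split.
  by rewrite monicE lead_coefDl // mulrC lead_coefMX; exact: m2.
by rewrite size_addl // sX.
Qed.

Lemma uSS (R : comNzRingType) k (t : R) :
  (Up R k.+2).[t] = t * (Up R k.+1).[t] - (Up R k).[t].
Proof. by rewrite UpSS hornerD hornerN hornerM hornerX. Qed.

Section Frob.
Variable L : fieldType.
Variable t : L.
Local Notation u k := (Up L k).[t].
Definition phi : {poly L} := 'X^2 - t%:P * 'X + 1.

Lemma claim1 k : phi %| 'X^(k.+1) - ((u k.+1)%:P * 'X - (u k)%:P).
Proof.
elim: k => [|k IH].
  by rewrite Up1 Up0 hornerC horner0 expr1 mul1r subr0 subrr dvdp0.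
have -> : 'X^(k.+2) - ((u k.+2)%:P * 'X - (u k.+1)%:P) =
   'X * ('X^(k.+1) - ((u k.+1)%:P * 'X - (u k)%:P)) + (u k.+1)%:P * phi.
  rewrite uSS /phi polyCB polyCM exprS; ring.
by rewrite dvdp_add ?dvdp_mull // dvdpp.
Qed.

Lemma size_phi : size phi = 3%N.
Proof.
rewrite /phi -addrA size_polyDl ?size_polyXn //.
rewrite (leq_ltn_trans (size_polyD _ _)) //.
rewrite gtn_max size_polyN -polyC1 size_polyC.
rewrite (leq_ltn_trans (size_polyMleq _ _)) ?size_polyC ?size_polyX //.
  by case: (_ != _).
by case: (t != 0).
Qed.

End Frob.

Lemma two_neq0 (L : fieldType) (p : nat) : odd p -> p \in [pchar L] -> (2%:R : L) != 0.
Proof.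
move=> op hp; apply/negP => /eqP h2.
have : (2 \in [pchar L])%N by rewrite inE /= h2 eqxx.
rewrite (pcharf_eq hp) inE => /eqP e; by rewrite -e in op.
Qed.

Lemma frobU (L : fieldType) (t : L) (p r m : nat) :
  prime p -> odd p -> p \in [pchar L] ->
  (Up L (p ^ r * m.+1)).[t] = 0 -> (Up L m.+1).[t] = 0 \/ t ^+ 2 = 4.
Proof.
move=> pp op hp huN.
set q := (p ^ r)%N.
have oq : odd q by rewrite /q oddX op orbT.
set j := q./2.
have qj : q = j.*2.+1 by rewrite /j -[in LHS](odd_double_half q) oq.
have hp' : p \in [pchar {poly L}] by rewrite pchar_poly.
have hq : [pchar {poly L}].-nat q by rewrite (eq_pnat _ (pcharf_eq hp')) /q pnatX pnat_id.
set u1 := (Up L m.+1).[t]; set u0 := (Up L m).[t].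
set R := u1%:P * 'X - u0%:P.
have [Q HQ] : exists Q, 'X^(m.+1) = Q * phi t + R.
  exists (('X^(m.+1) - R) %/ phi t).
  rewrite divpK ?claim1 // /R; ring.
have [k hk] : exists k, (q * m.+1 = k.+1)%N.
  by exists (q * m.+1).-1; rewrite prednK // muln_gt0 expn_gt0 prime_gt0.
have hB := claim1 t k.

set uN := (Up L k.+1).[t] in hB; set uN' := (Up L k).[t] in hB.
have huN' : uN = 0 by rewrite /uN -hk.
have [Y eY] : exists Y : {poly L}, Y = 2 * 'X - t%:P by eexists.
have [s es] : exists s : L, s = t ^+ 2 - 4 by eexists.
have [c ec] : exists c : L, c = u1 * t - 2 * u0 by eexists.
have hY : Y ^+ 2 - (s%:P) = 4 * phi t.
  by rewrite eY es /phi polyCB polyC_exp polyC_natr; ring.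
have hYj : phi t %| (Y ^+ 2) ^+ j - (s%:P) ^+ j.
  by rewrite subrXX hY -mulrA dvdp_mull // dvdp_mulr // dvdpp.
have h2R : 2 * R = u1%:P * Y + c%:P.
  by rewrite /R eY ec polyCB !polyCM polyC_natr; ring.
have eA : (2 * 'X^(m.+1)) ^+ q = (2 * Q * phi t) ^+ q + (u1%:P * Y + c%:P) ^+ q.
  by rewrite HQ -h2R -exprDn_pchar //; congr (_ ^+ _); ring.
rewrite exprDn_pchar // in eA.
have eX : (2 * 'X^(m.+1) : {poly L}) ^+ q = 2 ^+ q * 'X^(k.+1).
  by rewrite exprMn -exprM -hk mulnC.
set D : {poly L} := (2 ^+ q * uN - u1 ^+ q * s ^+ j * 2)%:P * 'X
                  + (- 2 ^+ q * uN' + u1 ^+ q * s ^+ j * t - c ^+ q)%:P.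
have eD : D = (2 * Q * phi t) ^+ q + u1%:P ^+ q * Y * ((Y ^+ 2) ^+ j - (s%:P) ^+ j)
        - 2 ^+ q * ('X^(k.+1) - (uN%:P * 'X - uN'%:P)).
  have eYq : Y ^+ q = Y * (Y ^+ 2) ^+ j by rewrite qj exprS -exprM mul2n.
  rewrite [2 ^+ q * (_ - _)]mulrBr -eX eA [(u1%:P * Y) ^+ q]exprMn eYq /D eY.
  rewrite !(polyCB, polyCM, polyCN, polyC_exp, polyC_natr) !polyCD !(polyCM, polyCN, polyC_exp, polyC_natr).
  ring.
have dD : phi t %| D.
  rewrite eD; apply: dvdp_sub; last exact: dvdp_mull.
  apply: dvdp_add; last exact: dvdp_mull.
  by apply: dvdp_exp; [rewrite qj | apply: dvdp_mull; exact: dvdpp].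
have D0 : D = 0.
  apply/eqP; apply/negPn/negP => nD.
  have := dvdp_leq nD dD; rewrite size_phi /D size_MXaddC.
  by case: (_ && _) => //; rewrite size_polyC; case: (_ != _).
have : D.[1] - D.[0] = 0 by rewrite D0 !horner0 subrr.
rewrite /D !(hornerD, hornerCM, hornerX, hornerC) huN' => h.
have h' : u1 ^+ q * s ^+ j * 2 = 0.
  by move: h; rewrite !mulr0 mulr1 sub0r !add0r addrK => /eqP; rewrite oppr_eq0 => /eqP.
move/eqP: h'; rewrite !mulf_eq0 !expf_eq0 (negbTE (two_neq0 op hp)) orbF.
case/orP => [/andP[_ /eqP]|/andP[_ /eqP]]; first by left.
by rewrite es => /eqP; rewrite subr_eq0 => /eqP; right.
Qed.

Lemma sum_pick (R : nzRingType) (N c : nat) (h : nat -> R) :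
  \sum_(k < N) (if (k : nat) == c then h k else 0) = if (c < N)%N then h c else 0.
Proof.
case: ltnP => hc.
  rewrite (bigD1 (Ordinal hc)) //= eqxx big1 ?addr0 // => k hk.
  rewrite ifN //; apply: contra hk => /eqP e; apply/eqP/val_inj => /=; exact: e.
by apply: big1 => k _; rewrite ifN // neq_ltn (leq_trans (ltn_ord k) hc).
Qed.

Lemma lcd_of (F : fieldType) n (a b : F) :
  (forall w : 'cV[F]_n, tridiagT n a b *m (tridiagT n a b *m w) = - w -> w = 0) ->
  LCD (genC n a b).
Proof.
move=> H c [u ->] Hd.
set G := genC n a b; set T := tridiagT n a b.
have hX : G *m (u *m G)^T = 0.
  apply/row_matrixP => j; rewrite row0 rowE mulmxA; apply: Hd.
  by exists (delta_mx 0 j).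
have Tsym : T^T = T.
  apply/matrixP => i k; rewrite !mxE [k == i]eq_sym orbC //.
have GG : G *m G^T = 1%:M + T *m T.
  by rewrite /G /genC tr_row_mx mul_row_col trmx1 mulmx1 Tsym.
rewrite trmx_mul mulmxA GG mulmxDl mul1mx -mulmxA in hX.
have hu : u^T = 0.
  apply: H; apply/eqP; rewrite -addr_eq0 addrC; exact/eqP.
by rewrite -[u]trmxK hu trmx0 mul0mx.
Qed.

Lemma eigenU (L : fieldType) (n : nat) (a b mu : L) (v : 'cV[L]_n.+1) :
  b != 0 -> v != 0 -> tridiagT n.+1 a b *m v = mu *: v ->
  (Up L n.+2).[(mu - a) / b] = 0.
Proof.
move=> bn0 vn0 hT.
pose g := fun k : nat => if (k < n.+1)%N then v (inord k) 0 else 0.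
have gv : forall i : 'I_n.+1, v i 0 = g i.
  by move=> i; rewrite /g ltn_ord inord_val.
have row_eq : forall j, (j < n.+1)%N ->
    a * g j + b * g j.+1 + (if (0 < j)%N then b * g j.-1 else 0) = mu * g j.
  move=> j hj.
  have := congr1 (fun M : 'M[L]_(n.+1, 1) => M (inord j) 0) hT; rewrite !mxE => h.
  transitivity (mu * v (inord j) 0); last by rewrite /g hj.
  rewrite -h.
  rewrite (eq_bigr (fun k : 'I_n.+1 => (if (k:nat) == j then a * g k else 0)
     + (if (k:nat) == j.+1 then b * g k else 0)
     + (if (k:nat) == j.-1 then (if (0 < j)%N then b * g k else 0) else 0))).
    rewrite !big_split /= (sum_pick _ _ (fun x => a * g x)) (sum_pick _ _ (fun x => b * g x)).
    rewrite (sum_pick _ _ (fun x => if (0 < j)%N then b * g x else 0)) hj.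
    have e1 : (if (j.+1 < n.+1)%N then b * g j.+1 else 0) = b * g j.+1.
      by case: ifP => // h'; rewrite /g h' mulr0.
    by rewrite e1 (leq_ltn_trans (leq_pred j) hj).
  move=> k _; rewrite !mxE gv -val_eqE /= inordK //.
  move: (k : nat) => K.
  repeat (case: eqP => ? /=); try case: ltnP => ? /=;
    try (exfalso; lia); rewrite ?mul0r ?addr0 ?add0r //.
pose w := fun k : nat => if k is k'.+1 then g k' else 0.
have wS : forall k, w k.+1 = g k by [].
have w0 : w 0 = 0 by [].
set t := (mu - a) / b.
have rec : forall k, (k < n.+1)%N -> w k.+2 = t * w k.+1 - w k.
  move=> k hk; have e := row_eq k hk.
  have e' : b * g k.+1 = mu * g k - a * g k - b * w k.
    rewrite -e; case: k {e hk} => [|k] /=; rewrite ?w0 ?wS; ring.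
  rewrite !wS -[g k.+1](mulKf bn0) e' /t; field; exact: bn0.
have ind : forall k, (k <= n.+1)%N ->
    w k = (Up L k).[t] * w 1 /\ w k.+1 = (Up L k.+1).[t] * w 1.
  move=> k0; elim: k0 => [|k IH] hk.
    by rewrite Up0 Up1 horner0 hornerC mul0r mul1r.
  have [h1 h2] := IH (ltnW hk).
  split; first exact: h2.
  by rewrite rec // h1 h2 uSS; ring.
have [_ hN] := ind n.+1 (leqnn _).
rewrite wS /g ltnn in hN.
move/eqP: hN; rewrite eq_sym mulf_eq0 => /orP[/eqP //|/eqP w10].
exfalso; move/negP: vn0; apply; apply/eqP/matrixP => i jj.
rewrite (ord1 jj) mxE gv.
have [h _] := ind i.+1 (ltn_ord i).
by rewrite -wS h w10 mulr0.
Qed.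

Lemma map_tridiag (F L : fieldType) (f : {rmorphism F -> L}) n (a b : F) :
  map_mx f (tridiagT n a b) = tridiagT n (f a) (f b).
Proof.
apply/matrixP => i j; rewrite !mxE.
by case: ifP => _ //; case: ifP => _ //; rewrite rmorph0.
Qed.

Theorem corollary2p6 (F : finFieldType) (p n r m : nat) (b : F) :
  prime p -> odd p -> p \in [pchar F] ->
  b != 0 -> (2 <= n)%N ->
  (p ^ r %| n.+1)%N -> ~~ (p ^ r.+1 %| n.+1)%N ->
  n.+1 = (p ^ r * m.+1)%N ->
  (1 <= r)%N ->
  (2 * m + 4 < #|F|)%N ->
  exists a : F, LCD (genC n a b).
Proof.
move=> pp op hp bn0 n2 _ _ hN r1 hF.
have nz : ('X^2 + 1 : {poly F}) != 0 by rewrite -polyC1 monic_neq0 // monicXnaddC.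
have [L [rs Drs _]] := FinSplittingFieldFor nz.
pose f := in_alg L.
have mapX2 : map_poly f ('X^2 + 1) = 'X^2 + 1.
  by rewrite rmorphD /= map_polyXn rmorph1.
have [i hi] : exists i : L, i ^+ 2 + 1 = 0.
  case: rs Drs => [|z rs] Drs.
    move/eqp_size: Drs; rewrite big_nil size_poly1 size_map_poly.
    by rewrite size_polyDl ?size_polyXn // size_poly1.
  exists z.
  have : root (\prod_(x <- z :: rs) ('X - x%:P)) z by rewrite root_prod_XsubC mem_head.
  rewrite -(eqp_root Drs) /= => /rootP.
  by rewrite mapX2 hornerD hornerXn hornerC.
have hpL : p \in [pchar L] := rmorph_pchar f hp.
set fb := f b.
have fbn0 : fb != 0 by rewrite fmorph_eq0.
pose V : {poly L} := Up L m.+1 * ('X^2 - (4 : L)%:P).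
have Vmon : V \is monic.
  by rewrite /V monicMl ?monicXnsubC //; case/andP: (Up_monic L m).
have sV : size V = m.+3.
  rewrite /V size_monicM ?monic_neq0 ?monicXnsubC //; last by case/andP: (Up_monic L m).
  rewrite size_XnsubC //; case/andP: (Up_monic L m) => _ /eqP ->; lia.
pose tf (e : L) (x : F) := (e - f x) / fb.
have tf_inj : forall e, injective (tf e).
  move=> e x y /(congr1 (fun z => e - z * fb)); rewrite /tf !divfK //.
  by rewrite !subKr => /fmorph_inj.
pose bad e := [set x : F | root V (tf e x)].
have card_bad : forall e, (#|bad e| <= m.+2)%N.
  move=> e.
  have := @max_poly_roots _ V [seq tf e x | x <- enum (bad e)] (monic_neq0 Vmon).
  rewrite size_map -cardE sV; apply.
    by apply/allP => y /mapP[x hx ->]; rewrite mem_enum inE in hx.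
  by rewrite map_inj_uniq ?enum_uniq.
have [x hx] : exists x, x \notin bad i :|: bad (- i).
  have : (0 < #|~: (bad i :|: bad (- i))|)%N.
    rewrite -(ltn_add2l #|bad i :|: bad (- i)|) addn0 cardsC.
    apply: (leq_ltn_trans _ hF).
    have := cardsU (bad i) (bad (- i)).
    have := card_bad i; have := card_bad (- i); lia.
  by rewrite card_gt0 => /set0Pn[x]; rewrite inE => hx; exists x.
exists x; apply: lcd_of => w hw.
apply/eqP; apply/negPn/negP => wn0.
case: n n2 hN w hw wn0 => [|n] // n2 hN w hw wn0.
set T := tridiagT n.+1 x b in hw.
pose w' := map_mx f w.
have hw' : tridiagT n.+1 (f x) fb *m (tridiagT n.+1 (f x) fb *m w') = - w'.
  by rewrite /w' -map_tridiag -!map_mxM hw map_mxN.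
have w'n0 : w' != 0 by rewrite map_mx_eq0.
have key : forall e : L, e ^+ 2 + 1 = 0 -> forall y : 'cV[L]_n.+1, y != 0 -> tridiagT n.+1 (f x) fb *m y = e *: y -> False.
  move=> e he y yn0 hy.
  have hu := eigenU fbn0 yn0 hy.
  rewrite hN in hu.
  have hbad : x \in bad e.
    rewrite inE /V rootM; case: (frobU pp op hpL hu) => h; apply/orP.
      by left; apply/rootP.
    by right; apply/rootP; rewrite /tf hornerD hornerN hornerXn hornerC h subrr.
  have E : (e - i) * (e + i) = (e ^+ 2 + 1) - (i ^+ 2 + 1) by ring.
  rewrite he hi subrr in E.
  move/eqP: E; rewrite mulf_eq0 => /orP[/eqP|/eqP] he'.
    have ei : e = i by apply/eqP; rewrite -subr_eq0 he'.
    by move: hx; rewrite inE -ei hbad.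
  have ei : e = - i by apply/eqP; rewrite -addr_eq0 he'.
  by move: hx; rewrite inE -ei hbad orbT.
have hi2 : i ^+ 2 = -1 by apply/eqP; rewrite -addr_eq0 hi.
pose y := tridiagT n.+1 (f x) fb *m w' - i *: w'.
case: (eqVneq y 0) => hy.
  apply: (key i hi w' w'n0).
  by move/eqP: hy; rewrite subr_eq0 => /eqP.
apply: (key (- i) _ y hy); first by rewrite sqrrN.
rewrite /y mulmxBr hw' -scalemxAr scalerBr scalerA mulNr -expr2 hi2 opprK scale1r.
by rewrite scaleNr addrC.
Qed.
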